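(* Let $\Omega=\{y\in\mathbb{R}^n: a_i^Ty\le b_i,\ i=1,\ldots,m\}$, let $x\in\Omega$ and $\alpha>0$, and suppose the nearly-active index set $I(x,\alpha)$ has $q\le n$ elements and $\{a_i:i\in I(x,\alpha)\}$ are linearly independent; label them so that $I(x,\alpha)=\{1,\ldots,q\}$ and let $A=[a_1\ \cdots\ a_q]\in\mathbb{R}^{n\times q}$. Let $u_1,\ldots,u_n$ be an orthonormal set of left singular vectors of $A$ with $u_1,\ldots,u_q$ spanning $\operatorname{col}(A)$. For $i=1,\ldots,q$ let $\hat d_i:=-(A^\dagger)^Te_i$, $d_i:=\frac{\alpha}{\|\hat d_i\|}\hat d_i$, and let $\alpha_i$ be the largest value in $[0,1]$ such that $x-\alpha_id_i\in\Omega$. Define $$\mathcal{D}=\{d_1,\ldots,d_q\}\cup\{-\alpha_1d_1,\ldots,-\alpha_qd_q\}\cup\{\pm\alpha u_{q+1},\ldots,\pm\alpha u_n\}.$$ Then $x+d\in\Omega$ for all $d\in\mathcal{D}$, and for all $i=1,\ldots,q$, $$\alpha_i=\min\left(\frac{\|\hat d_i\|s_i}{\alpha},1\right),$$ where $s_i:=b_i-a_i^Tx\ge0$.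
   Context: Nearly-active constraints: $I(x,\alpha):=\{i\in\{1,\ldots,m\}: b_i-\alpha\|a_i\|\le a_i^Tx\}$ (constraints whose boundary hyperplane is within distance $\alpha$ of $x$). $A^\dagger=(A^TA)^{-1}A^T$ is the Moore–Penrose pseudoinverse and $e_i\in\mathbb{R}^q$ the coordinate vectors; $\|\cdot\|$ is the Euclidean norm. *)

(* Defs.v *)
From mathcomp Require Import all_boot all_order all_algebra.
Set Implicit Arguments. Unset Strict Implicit. Unset Printing Implicit Defensive.
Import Order.TTheory GRing.Theory Num.Theory.
Local Open Scope ring_scope.

Definition dotv {R : numDomainType} {n : nat} (u v : 'cV[R]_n) : R :=
  \sum_(j < n) u j 0 * v j 0.
Definition normv {R : rcfType} {n : nat} (v : 'cV[R]_n) : R :=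
  Num.sqrt (dotv v v).

Definition in_Omega {R : numDomainType} {n m : nat}
  (a : 'I_m -> 'cV[R]_n) (b : 'I_m -> R) (y : 'cV[R]_n) : Prop :=
  forall i : 'I_m, dotv (a i) y <= b i.

Definition nearly_active {R : rcfType} {n m : nat}
  (a : 'I_m -> 'cV[R]_n) (b : 'I_m -> R) (x : 'cV[R]_n) (alpha : R) (i : 'I_m) : Prop :=
  b i - alpha * normv (a i) <= dotv (a i) x.

Definition constr_mx {R : numDomainType} {n m q : nat}
  (a : 'I_m -> 'cV[R]_n) (idx : 'I_q -> 'I_m) : 'M[R]_(n, q) :=
  \matrix_(j < n, k < q) a (idx k) j 0.

Definition pinv {R : fieldType} {n q : nat} (A : 'M[R]_(n, q)) : 'M[R]_(q, n) :=
  invmx (A^T *m A) *m A^T.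

Definition left_singular_vectors {R : numDomainType} {n q : nat}
  (A : 'M[R]_(n, q)) (U : 'M[R]_n) : Prop :=
  U^T *m U = 1%:M /\
  exists (S : 'M[R]_(n, q)) (V : 'M[R]_q),
    V^T *m V = 1%:M /\
    (forall (i : 'I_n) (j : 'I_q), (i : nat) <> (j : nat) -> S i j = 0) /\
    (forall (i : 'I_n) (j : 'I_q), 0 <= S i j) /\
    A = U *m S *m V^T.

(* Matrix whose rows are u_0^T, ..., u_{q-1}^T (columns of U), other rows zero;
   its row space is span{u_0, ..., u_{q-1}}. *)
Definition first_cols {R : numDomainType} {n : nat} (q : nat) (U : 'M[R]_n) : 'M[R]_n :=
  \matrix_(k < n, j < n) (if (k < q)%N then U j k else 0).

Definition dhat {R : fieldType} {n q : nat} (A : 'M[R]_(n, q)) (i : 'I_q) : 'cV[R]_n :=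
  - ((pinv A)^T *m delta_mx i (0 : 'I_1)).

Definition dir {R : rcfType} {n q : nat} (alpha : R) (A : 'M[R]_(n, q)) (i : 'I_q)
  : 'cV[R]_n :=
  (alpha / normv (dhat A i)) *: dhat A i.

Definition is_largest_step {R : numDomainType} {n m : nat}
  (a : 'I_m -> 'cV[R]_n) (b : 'I_m -> R) (x d : 'cV[R]_n) (t : R) : Prop :=
  [/\ 0 <= t <= 1, in_Omega a b (x - t *: d) &
      forall t' : R, 0 <= t' <= 1 -> in_Omega a b (x - t' *: d) -> t' <= t].

(* membership in the set D (indices 0-based: u_{q+1..n} are columns k >= q of U) *)
Definition in_D {R : rcfType} {n q : nat} (alpha : R) (A : 'M[R]_(n, q))
  (U : 'M[R]_n) (alphas : 'I_q -> R) (d : 'cV[R]_n) : Prop :=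
  (exists i : 'I_q, d = dir alpha A i) \/
  (exists i : 'I_q, d = - (alphas i *: dir alpha A i)) \/
  (exists k : 'I_n, (q <= k)%N /\ (d = alpha *: col k U \/ d = - (alpha *: col k U))).

(* Main.v *)
Require Import Defs.
From mathcomp Require Import all_boot all_order all_algebra.
From mathcomp Require Import ring lra.
Import Order.TTheory GRing.Theory Num.Theory.
Local Open Scope ring_scope.

Section Aux.
Variable R : rcfType.
Variable n : nat.
Implicit Types u v w : 'cV[R]_n.

Lemma dotvC u v : dotv u v = dotv v u.
Proof. by apply: eq_bigr => j _; rewrite mulrC. Qed.

Lemma dotvDr u v w : dotv u (v + w) = dotv u v + dotv u w.
Proof. by rewrite /dotv -big_split; apply: eq_bigr => j _; rewrite mxE mulrDr. Qed.

Lemma dotvZr u (c : R) v : dotv u (c *: v) = c * dotv u v.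
Proof. by rewrite /dotv mulr_sumr; apply: eq_bigr => j _; rewrite mxE mulrCA. Qed.

Lemma dotvNr u v : dotv u (- v) = - dotv u v.
Proof. by rewrite -scaleN1r dotvZr mulN1r. Qed.

Lemma dotvBr u v w : dotv u (v - w) = dotv u v - dotv u w.
Proof. by rewrite dotvDr dotvNr. Qed.

Lemma dotvDl u v w : dotv (v + w) u = dotv v u + dotv w u.
Proof. by rewrite dotvC dotvDr !(dotvC u). Qed.
Lemma dotvZl u (c : R) v : dotv (c *: v) u = c * dotv v u.
Proof. by rewrite dotvC dotvZr dotvC. Qed.
Lemma dotvBl u v w : dotv (v - w) u = dotv v u - dotv w u.
Proof. by rewrite dotvC dotvBr !(dotvC u). Qed.

Lemma dotv_ge0 v : 0 <= dotv v v.
Proof. by apply: sumr_ge0 => j _; rewrite -expr2 sqr_ge0. Qed.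

Lemma dotv_eq0 v : dotv v v = 0 -> v = 0.
Proof.
move=> h; apply/matrixP => j k; rewrite ord1 mxE.
have hj := @psumr_eq0P R _ xpredT (fun i => v i 0 * v i 0)
  (fun i _ => (sqr_ge0 (v i 0))) h j isT.
by move/eqP: hj; rewrite mulf_eq0 orbb => /eqP.
Qed.

Definition nv v := normv v.

Lemma normv_ge0 v : 0 <= normv v.
Proof. exact: sqrtr_ge0. Qed.

Lemma normv_sq v : normv v ^+ 2 = dotv v v.
Proof. by rewrite sqr_sqrtr // dotv_ge0. Qed.

Lemma normvZ (c : R) v : 0 <= c -> normv (c *: v) = c * normv v.
Proof.
move=> hc; rewrite /normv dotvZl dotvZr mulrA -expr2 sqrtrM ?sqr_ge0 //.
by rewrite sqrtr_sqr ger0_norm.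
Qed.

Lemma normvN v : normv (- v) = normv v.
Proof. by rewrite /normv dotvNr dotvC dotvNr opprK. Qed.

Lemma cs_sq u v : dotv u v ^+ 2 <= dotv u u * dotv v v.
Proof.
have [v0|vn0] := eqVneq (dotv v v) 0.
  have -> : dotv u v = 0.
    by rewrite (dotv_eq0 v v0) /dotv big1 // => j _; rewrite mxE mulr0.
  by rewrite v0 expr0n mulr0.
have vp : 0 < dotv v v by rewrite lt0r vn0 dotv_ge0.
have := dotv_ge0 (dotv v v *: u - dotv u v *: v).
rewrite !(dotvBl, dotvBr, dotvZl, dotvZr) (dotvC v u) => h.
have e : dotv v v * (dotv v v * dotv u u) - dotv v v * (dotv u v * dotv u v) -
     (dotv u v * (dotv v v * dotv u v) - dotv u v * (dotv u v * dotv v v))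
   = dotv v v * (dotv u u * dotv v v - dotv u v ^+ 2) by ring.
rewrite e pmulr_rge0 // in h; by rewrite -subr_ge0.
Qed.

Lemma cs u v : `|dotv u v| <= normv u * normv v.
Proof.
rewrite -sqrtr_sqr /normv -sqrtrM ?dotv_ge0 //.
by rewrite ler_sqrt ?cs_sq // mulr_ge0 ?dotv_ge0.
Qed.
End Aux.

Lemma AtA_unit (R : rcfType) n q (A : 'M[R]_(n,q)) : \rank A = q -> A^T *m A \in unitmx.
Proof.
move=> rA; rewrite -row_free_unit -kermx_eq0; apply/eqP/row_matrixP => i.
rewrite row0.
set w := row i (kermx (A^T *m A)).
have hw : w *m (A^T *m A) = 0 by apply/sub_kermxP; rewrite row_sub.
set y := w *m A^T.
have hy : (y *m y^T) 0 0 = 0.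
  by rewrite /y trmx_mul trmxK !mulmxA -(mulmxA w) hw mul0mx mxE.
have ey : y = w *m A^T by [].
clearbody y; have y0 : y = 0.
  apply/matrixP => k j; rewrite ord1 mxE.
  rewrite !mxE in hy.
  have nn : forall l, xpredT l -> 0 <= y 0 l * y^T l 0.
    by move=> l _; rewrite mxE; exact: sqr_ge0.
  have hj := @psumr_eq0P R _ xpredT (fun l => y 0 l * y^T l 0) nn hy j isT.
  by move/eqP: hj; rewrite ?mxE mulf_eq0 orbb => /eqP.
have rf : row_free A^T by rewrite /row_free mxrank_tr rA.
by apply/eqP; rewrite -(mulmx_free_eq0 w rf) -ey y0.
Qed.

Lemma dot_col (R : rcfType) n m q (a : 'I_m -> 'cV[R]_n) (idx : 'I_q -> 'I_m) k w :
  dotv (a (idx k)) w = ((constr_mx a idx)^T *m w) k 0.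
Proof. by rewrite /dotv !mxE; apply: eq_bigr => j _; rewrite !mxE. Qed.

Lemma At_dhat (R : rcfType) n q (A : 'M[R]_(n,q)) i :
  \rank A = q -> A^T *m dhat A i = - delta_mx i 0.
Proof.
move=> rA; rewrite /dhat mulmxN /pinv trmx_mul trmxK trmx_inv trmx_mul trmxK.
by rewrite !mulmxA mulmxV ?AtA_unit // mul1mx.
Qed.

Theorem lemma5p7 (R : rcfType) (n m q : nat)
  (a : 'I_m -> 'cV[R]_n) (b : 'I_m -> R) (x : 'cV[R]_n) (alpha : R)
  (idx : 'I_q -> 'I_m) (U : 'M[R]_n) (alphas : 'I_q -> R) :
  in_Omega a b x ->
  0 < alpha ->
  (q <= n)%N ->
  injective idx ->
  (forall i : 'I_m, nearly_active a b x alpha i <-> exists k : 'I_q, i = idx k) ->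
  \rank (constr_mx a idx) = q ->
  left_singular_vectors (constr_mx a idx) U ->
  (first_cols q U == (constr_mx a idx)^T)%MS ->
  (forall i : 'I_q, is_largest_step a b x (dir alpha (constr_mx a idx) i) (alphas i)) ->
  (forall d : 'cV[R]_n, in_D alpha (constr_mx a idx) U alphas d -> in_Omega a b (x + d)) /\
  (forall i : 'I_q,
     0 <= b (idx i) - dotv (a (idx i)) x /\
     alphas i = Num.min (normv (dhat (constr_mx a idx) i) * (b (idx i) - dotv (a (idx i)) x) / alpha) 1).
Proof.
move=> hx ha hqn _ hna rA [hU _] hF hstep.
set A := constr_mx a idx.
have hdot : forall k i, dotv (a (idx k)) (dhat A i) = - (k == i)%:R.
  by move=> k i; rewrite (@dot_col _ _ _ _ a idx k) -/A At_dhat // !mxE eqxx andbT.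
have Npos : forall i, 0 < normv (dhat A i).
  move=> i; rewrite lt0r normv_ge0 andbT; apply/eqP => h0.
  have : dotv (dhat A i) (dhat A i) = 0 by rewrite -normv_sq h0 expr0n.
  move/dotv_eq0 => d0; have := hdot i i; rewrite d0 eqxx.
  rewrite /dotv big1 => [/eqP|j _]; last by rewrite mxE mulr0.
  by rewrite eq_sym oppr_eq0 oner_eq0.
have hdir : forall k i, dotv (a (idx k)) (dir alpha A i)
    = alpha / normv (dhat A i) * - (k == i)%:R.
  by move=> k i; rewrite /dir dotvZr hdot.
have normdir : forall i, normv (dir alpha A i) = alpha.
  move=> i; rewrite /dir normvZ ?divfK ?divr_ge0 ?normv_ge0 ?ltW //.
  by rewrite gt_eqF.
have gen : forall d t, normv d = alpha -> `|t| <= 1 ->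
    (forall k, dotv (a (idx k)) (x + t *: d) <= b (idx k)) ->
    in_Omega a b (x + t *: d).
  move=> d t nd ht hk j.
  have [hj|hj] := boolP (b j - alpha * normv (a j) <= dotv (a j) x).
    by have [k ->] := (hna j).1 hj; apply: hk.
  rewrite -ltNge in hj.
  rewrite dotvDr dotvZr.
  have c1 := @cs _ _ (a j) d; rewrite nd in c1.
  have c2 : t * dotv (a j) d <= `|t| * `|dotv (a j) d|.
    by rewrite -normrM ler_norm.
  have c3 : 0 <= `|dotv (a j) d| := normr_ge0 _.
  nra.
have colU : forall k : 'I_n, (q <= k)%N -> A^T *m col k U = 0 /\ normv (col k U) = 1.
  move=> k hk; split.
    case/andP: hF => _ /submxP [D ->].
    rewrite -mulmxA; apply/eqP; rewrite (_ : first_cols q U *m col k U = 0) ?mulmx0 //.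
    apply/matrixP => l z; rewrite !mxE.
    have := congr1 (fun M : 'M_n => M l k) hU; rewrite !mxE => e.
    case hl : (l < q)%N.
      have lk : (l == k) = false by apply/negbTE; apply: contraTneq hl => ->; rewrite -leqNgt.
      rewrite lk /= mulr0n in e; rewrite -[X in _ = X]e; apply: eq_bigr => j _; rewrite !mxE hl.
      by [].
    by apply: big1 => j _; rewrite !mxE hl mul0r.
  have := congr1 (fun M : 'M_n => M k k) hU; rewrite !mxE eqxx /= => e.
  have hd : dotv (col k U) (col k U) = 1.
    by apply: (etrans _ e); apply: eq_bigr => j _; rewrite !mxE.
  by rewrite /normv hd sqrtr1.
have dcol : forall k0 (k : 'I_n), (q <= k)%N -> dotv (a (idx k0)) (col k U) = 0.
  by move=> k0 k hk; rewrite (@dot_col _ _ _ _ a idx k0) -/A (colU k hk).1 mxE.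
split.
  move=> d [[i ->]|[[i ->]|[k [hk [-> | ->]]]]].
  - have := gen _ 1 (normdir i); rewrite normr1 scale1r; apply => // k.
    rewrite dotvDr hdir; have h1 := hx (idx k).
    have h2 : 0 <= alpha / normv (dhat A i) by rewrite divr_ge0 ?normv_ge0 ?ltW.
    have h3 : 0 <= (k == i)%:R :> R by rewrite ler0n.
    nra.
  - by case: (hstep i).
  - have hn : normv (alpha *: col k U) = alpha.
      by rewrite normvZ ?ltW // (colU k hk).2 mulr1.
    have := gen _ 1 hn; rewrite normr1 scale1r; apply => //.
    by move=> k0; rewrite dotvDr dotvZr dcol // mulr0 addr0 hx.
  - have hn : normv (alpha *: col k U) = alpha.
      by rewrite normvZ ?ltW // (colU k hk).2 mulr1.
    rewrite -scaleN1r.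
    have := gen _ (-1) hn; rewrite normrN normr1; apply => //.
    by move=> k0; rewrite dotvDr dotvZr dotvZr dcol // !mulr0 addr0 hx.
move=> i; split; first by rewrite subr_ge0 hx.
set N := normv (dhat A i); set s := b (idx i) - dotv (a (idx i)) x.
have Np : 0 < N := Npos i.
have s0 : 0 <= s by rewrite subr_ge0 hx.
set c := N * s / alpha.
have c0 : 0 <= c by apply: divr_ge0; [apply: mulr_ge0; [exact: ltW|exact: s0]|exact: ltW].
have ecs : c * (alpha / N) = s by rewrite /c; field; rewrite ?gt_eqF.
have feas : forall t, 0 <= t <= 1 -> t <= c -> in_Omega a b (x - t *: dir alpha A i).
  move=> t /andP [t0 t1] tc; rewrite -scaleNr.
  apply: gen; first exact: normdir.
    by rewrite normrN ger0_norm.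
  move=> k; rewrite dotvDr dotvZr hdir -/N.
  have h1 := hx (idx k).
  have [->|kni] := eqVneq k i.
    rewrite /= mulr1n.
    have : t * (alpha / N) <= s.
      by rewrite -ecs; apply: ler_wpM2r => //; apply: divr_ge0; apply: ltW.
    rewrite /s; lra.
  by rewrite /= mulr0n oppr0 !mulr0 addr0.
case: (hstep i) => /andP [a0 a1] hom hmax.
have ac : alphas i <= c.
  have := hom (idx i); rewrite dotvBr dotvZr hdir eqxx -/N => h.
  rewrite /= mulr1n in h.
  have h2 : alphas i * (alpha / N) <= s by rewrite /s; lra.
  have hNa : 0 <= N / alpha by apply: divr_ge0; apply: ltW.
  have := ler_wpM2r hNa h2.
  have -> : alphas i * (alpha / N) * (N / alpha) = alphas i.
    by field; rewrite !gt_eqF.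
  have -> : s * (N / alpha) = c by rewrite /c; ring.
  done.
apply/le_anti; rewrite le_min a1 ac /=.
apply: hmax.
  by rewrite le_min c0 ler01 /= ge_min lexx orbT.
by apply: feas; rewrite ?le_min ?ge_min ?c0 ?ler01 ?lexx ?orbT.
Qed.
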